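(* Let $k\ge 2$. Every undirected graph $G$ whose acyclic chromatic number is at most $k$ satisfies $\chi_p(G)\le k\cdot 2^{k-2}$.
   Context: An acyclic $k$-coloring of an undirected simple graph is a proper vertex coloring with $k$ colors such that the subgraph induced by any two color classes is a forest; the acyclic chromatic number is the least such $k$. An oriented graph is a directed graph with no loops and no pair of opposite arcs; an orientation of $G$ is obtained by orienting each edge. A homomorphism of oriented graphs $\vec G\to\vec H$ is a vertex map sending every arc $uv$ to an arc $\varphi(u)\varphi(v)$. To push a vertex means to reverse all arcs incident with it; the push graph $[\vec G]$ is the set of oriented graphs obtainable from $\vec G$ by pushing some set of vertices (its presentations). $[\vec G]$ admits a homomorphism to $\vec H$ if some presentation does. The push chromatic number $\chi_p([\vec G])$ is the minimum number of vertices of an oriented graph $\vec H$ with $[\vec G]\to\vec H$, and $\chi_p(G)$ is the maximum of $\chi_p([\vec G])$ over all orientations $\vec G$ of $G$. *)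

(* Defs.v *)
From mathcomp Require Import all_boot.
Set Implicit Arguments. Unset Strict Implicit. Unset Printing Implicit Defensive.

Definition simple_graph (T : finType) (e : rel T) : Prop :=
  irreflexive e /\ symmetric e.

Definition is_graph_cycle (T : finType) (e : rel T) (s : seq T) : Prop :=
  [/\ uniq s, 3 <= size s & cycle e s].

Definition acyclic_coloring (T : finType) (e : rel T) (k : nat) (c : T -> 'I_k)
  : Prop :=
  (forall x y, e x y -> c x != c y) /\
  (forall (i j : 'I_k) (s : seq T),
      all (fun x => (c x == i) || (c x == j)) s -> ~ is_graph_cycle e s).

Definition acyclic_chromatic_le (T : finType) (e : rel T) (k : nat) : Prop :=
  exists k', k' <= k /\ exists c : T -> 'I_k', acyclic_coloring e c.

Definition oriented (T : finType) (a : rel T) : Prop :=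
  irreflexive a /\ (forall x y, a x y -> ~~ a y x).

Definition orientation_of (T : finType) (e a : rel T) : Prop :=
  oriented a /\ (forall x y, e x y = a x y || a y x).

Definition push (T : finType) (a : rel T) (X : {set T}) : rel T :=
  fun x y => if (x \in X) != (y \in X) then a y x else a x y.

Definition ohom (T U : finType) (a : rel T) (b : rel U) (phi : T -> U) : Prop :=
  forall x y, a x y -> b (phi x) (phi y).

Definition push_hom (T U : finType) (a : rel T) (b : rel U) : Prop :=
  exists (X : {set T}) (phi : T -> U), ohom (push a X) b phi.

Definition push_chromatic_le (T : finType) (a : rel T) (m : nat) : Prop :=
  exists n, n <= m /\ exists b : rel 'I_n, oriented b /\ push_hom a b.

Definition graph_push_chromatic_le (T : finType) (e : rel T) (m : nat) : Prop :=
  forall a : rel T, orientation_of e a -> push_chromatic_le a m.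

(* Main.v *)
Require Import Defs.
From mathcomp Require Import all_boot.

Lemma no_path (T : finType) (e : rel T) x y :
  symmetric e -> irreflexive e ->
  (forall s, uniq s -> 3 <= size s -> cycle e s -> False) ->
  e x y ->
  ~~ connect (fun u v => e u v && ~~ (((u == x) && (v == y)) || ((u == y) && (v == x)))) x y.
Proof.
move=> sym irr acyc exy; set e' := fun u v => _.
apply/negP => /connectP [p0 pp0 yl].
move: yl; case: (shortenP pp0) => p pp up _ yl.
have sub : subrel e' e by move=> u v /andP[].
case: p pp up yl => [|y1 [|y2 p]] pp up yl /=.
- by rewrite /= in yl; rewrite -yl irr in exy.
- move: pp yl => /= /andP[/andP[_]] + _ yl; by rewrite -yl !eqxx.
- apply: (acyc (x :: y1 :: y2 :: p)) => //.
  rewrite /cycle rcons_path (sub_path sub pp) /=.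
  by rewrite /= in yl; rewrite -yl sym.
Qed.

Lemma forest_sol (T : finType) (p : rel T) : forall n (e : rel T),
  #|[set z : T * T | e z.1 z.2]| <= n -> symmetric e -> irreflexive e ->
  (forall s, uniq s -> 3 <= size s -> cycle e s -> False) ->
  (forall x y, e x y -> p x y = p y x) ->
  exists f : T -> bool, forall x y, e x y -> f x (+) f y = p x y.
Proof.
elim=> [|n IH] e.
  move=> /= c0 _ _ _ _; exists (fun _ => false) => x y exy.
  have : (x, y) \in [set z : T * T | e z.1 z.2] by rewrite inE.
  by move: c0; rewrite leqn0 => /eqP/card0_eq ->.
move=> cn sym irr acyc psym.
case: (pickP [pred z : T * T | e z.1 z.2]) => [[x y] /= exy | none]; last first.
  by exists (fun _ => false) => u v euv; move: (none (u, v)); rewrite /= euv.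
pose e' := fun u v => e u v && ~~ (((u == x) && (v == y)) || ((u == y) && (v == x))).
have sub : subrel e' e by move=> u v /andP[].
have sym' : symmetric e'.
  by move=> u v; rewrite /e' sym orbC (andbC (v == x)) (andbC (v == y)).
have irr' : irreflexive e' by move=> u; rewrite /e' irr.
have acyc' : forall s, uniq s -> 3 <= size s -> cycle e' s -> False.
  by move=> s us ss cs; apply: (acyc s us ss (sub_cycle sub cs)).
have lt : #|[set z : T * T | e' z.1 z.2]| < #|[set z : T * T | e z.1 z.2]|.
  apply: proper_card; apply/properP; split.
    by apply/subsetP => z; rewrite !inE => /andP[].
  by exists (x, y); rewrite !inE /= ?exy // /e' !eqxx /= andbF.
have [f' Hf'] := IH e' (leq_trans (leq_trans lt cn) (leqnn _)) sym' irr' acyc' (fun u v h => psym u v (sub u v h)).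
have nc := @no_path _ _ x y sym irr acyc exy.
have csym := @sym_connect_sym _ _ sym'.
have ceq : forall u v, e' u v -> connect e' x u = connect e' x v.
  move=> u v h; apply/idP/idP => H.
    by apply: connect_trans H (connect1 h).
  by apply: connect_trans H (connect1 _); rewrite sym'.
have key : forall (g : T -> bool), g x (+) g y = p x y ->
   (forall u v, e' u v -> g u (+) g v = p u v) ->
   forall u v, e u v -> g u (+) g v = p u v.
  move=> g gxy ge u v euv; case E: (e' u v); first exact: ge.
  move: E; rewrite /e' euv /= => /negbFE /orP [] /andP [/eqP -> /eqP ->] //.
  by rewrite -psym // addbC.
case: (boolP (f' x (+) f' y == p x y)) => [/eqP h | h].
  by exists f'; apply: key.
exists (fun z => f' z (+) connect e' x z); apply: key.
  rewrite connect0 (negbTE nc).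
  by move: h; case: (f' x); case: (f' y); case: (p x y).
move=> u v h2; rewrite (ceq u v h2) -(Hf' u v h2).
by case: (f' u); case: (f' v); case: (connect e' x v).
Qed.
Lemma core K (T : finType) (e a : rel T) (c : T -> 'I_K.+2) :
  simple_graph e -> acyclic_coloring e c -> orientation_of e a ->
  push_chromatic_le a (K.+2 * 2 ^ K).
Proof.
move=> [irr sym] [proper acyc] [[airr aant] eab].
pose eij (i j : 'I_K.+2) := fun u v => [&& e u v, (c u == i) || (c u == j) & (c v == i) || (c v == j)].
pose pp := fun u v => if c u < c v then a u v else a v u.
have G : forall i j, exists f : {ffun T -> bool}, [forall u, forall v, eij i j u v ==> (f u (+) f v == pp u v)].
  move=> i j.
  have [||||f Hf] := @forest_sol T pp _ (eij i j) (leqnn _).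
  - by move=> u v; rewrite /eij sym; congr (_ && _); rewrite andbC.
  - by move=> u; rewrite /eij irr.
  - move=> s us ss cs; apply: (acyc i j s _); last by split => //; apply: sub_cycle cs => u v /andP[].
    apply/allP => x xs; have := next_cycle cs xs; by rewrite /eij => /and3P[_ ->].
  - move=> u v /and3P[h _ _]; have ne := proper u v h; rewrite /pp.
    have [lt|gt|eq] := ltngtP (c u) (c v) => //.
    by move: ne; rewrite -val_eqE /= eq eqxx.
  - exists (finfun f); apply/forallP => u; apply/forallP => v; apply/implyP => h.
    by rewrite !ffunE Hf.
pose g i j := xchoose (G i j).
have Hg i j u v : eij i j u v -> g i j u (+) g i j v = pp u v.
  by move: (xchooseP (G i j)) => /forallP/(_ u)/forallP/(_ v)/implyP H /H/eqP.
pose bit u (j : 'I_K.+2) := if c u < j then g (c u) j u else g j (c u) u.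
have ab : forall u v, e u v -> a v u = ~~ a u v.
  move=> u v h; move: (eab u v) (aant u v); rewrite h.
  by case: (a u v); case: (a v u) => //= _ H; have := H isT.
have edge : forall u v, e u v -> c u < c v -> a u v = bit u (c v) (+) bit v (c u).
  move=> u v h lt; rewrite /bit lt ltnNge (ltnW lt) /=.
  rewrite (Hg (c u) (c v) u v); first by rewrite /pp lt.
  by rewrite /eij h !eqxx orbT.
pose X := [set u | bit u (lift (c u) ord0)].
pose bit' u j := bit u j (+) (u \in X).
pose a' := push a X.
have edge' : forall u v, e u v -> c u < c v -> a' u v = bit' u (c v) (+) bit' v (c u).
  move=> u v h lt; rewrite /a' /push /bit' (ab u v h) (edge u v h lt).
  by case: (u \in X); case: (v \in X); case: (bit u _); case: (bit v _).
have a'e : forall u v, a' u v -> e u v.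
  by move=> u v; rewrite /a' /push !eab; case: ifP => _ ->; rewrite ?orbT.
have a'anti : forall u v, e u v -> a' v u = ~~ a' u v.
  move=> u v h; rewrite /a' /push eq_sym; case: ifP => _.
    by rewrite (ab v u) ?negbK // sym.
  by rewrite (ab u v).
pose U := ('I_K.+2 * {ffun 'I_K -> bool})%type.
pose phi u : U := (c u, [ffun t => bit' u (lift (c u) (lift ord0 t))]).
pose get (x : U) (j : 'I_K.+2) : bool :=
  match unlift x.1 j with
  | Some j1 => match unlift (ord0 : 'I_K.+1) j1 with Some t => x.2 t | None => false end
  | None => false end.
have getE : forall u j, j != c u -> get (phi u) j = bit' u j.
  move=> u j nj; rewrite /get /=; case: unliftP => [j1 ej | ej]; last by rewrite ej eqxx in nj.
  rewrite ej; case: unliftP => [t -> | ->]; first by rewrite ffunE.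
  by rewrite /bit' inE addbb.
pose b (x y : U) := (x.1 != y.1) && ((x.1 < y.1) == (get x y.1 (+) get y x.1)).
have ob : oriented b.
  split; first by move=> x; rewrite /b eqxx.
  move=> x y /andP[ne /eqP H]; rewrite /b eq_sym ne /=.
  move: H; have [lt|gt|eq] := ltngtP x.1 y.1.
  - by rewrite addbC => <-.
  - by rewrite addbC => <-.
  - by move: ne; rewrite -val_eqE /= eq eqxx.
have hom : forall u v, a' u v -> b (phi u) (phi v).
  move=> u v h; have huv := a'e u v h; have ne := proper u v huv.
  rewrite /b /= ne /= (getE u (c v)) 1?eq_sym // (getE v (c u)) //.
  have [lt|gt|eq] := ltngtP (c u) (c v).
  - by rewrite -(edge' u v huv lt) h.
  - have := edge' v u (etrans (esym (sym u v)) huv) gt.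
    by rewrite (a'anti u v huv) h /= addbC => <-.
  - by move: ne; rewrite -val_eqE /= eq eqxx.
exists #|{: U}|; split.
  by rewrite card_prod card_ffun card_bool !card_ord.
exists (fun i j : 'I_#|{: U}| => b (enum_val i) (enum_val j)); split.
  split; first by move=> i; apply: (ob.1).
  by move=> i j; apply: (ob.2).
exists X, (fun u => enum_rank (phi u)) => u v h.
by rewrite !enum_rankK; apply: hom.
Qed.

Theorem theorem3 (k : nat) (hk : 2 <= k) (T : finType) (e : rel T) :
  simple_graph e -> acyclic_chromatic_le e k ->
  graph_push_chromatic_le e (k * 2 ^ (k - 2)).
Proof.
move=> sg [k' [le [c ac]]] a ao.
case: k' le c ac => [|[|K]] le c ac.
- have noe : forall x y, ~~ e x y by move=> x; case: (c x).
  exists 1; split.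
    by rewrite muln_gt0 expn_gt0 (leq_trans _ hk).
  exists (fun _ _ => false); split; first by split.
  exists set0, (fun _ => ord0) => x y; rewrite /push; case: ifP => _ H.
    by have := noe x y; rewrite ao.2 H orbT.
  by have := noe x y; rewrite ao.2 H.
- have noe : forall x y, ~~ e x y.
    move=> x y; apply/negP => h; have := ac.1 x y h.
    by case: (c x) (c y) => [[|m] Hm] [[|n] Hn].
  exists 1; split.
    by rewrite muln_gt0 expn_gt0 (leq_trans _ hk).
  exists (fun _ _ => false); split; first by split.
  exists set0, (fun _ => ord0) => x y; rewrite /push; case: ifP => _ H.
    by have := noe x y; rewrite ao.2 H orbT.
  by have := noe x y; rewrite ao.2 H.
- have [n [len rest]] := @core K T e a c sg ac ao.
  exists n; split => //; apply: (leq_trans len).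
  apply: leq_mul => //; apply: leq_pexp2l => //.
  by rewrite leq_subRL ?addn2 // (leq_trans _ le).
Qed.
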